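(* Let $n_1,\dots,n_r,k$ be integers with $\min\{n_1,\dots,n_r\}>2k>0$, and let $g\in S_{n_1}\times\dots\times S_{n_r}$ be such that for every $1\le i\le r$, all cycles of the projection of $g$ to $S_{n_i}$ have length exceeding $k$. Then the subgroups $S_{n_1-k}\times\dots\times S_{n_r-k}$ and $\langle g\rangle$ invariably generate $S_{n_1}\times\dots\times S_{n_r}$.
   Context: $S_{n_1}\times\dots\times S_{n_r}$ is the group of permutations of $\{1,\dots,n_1+\dots+n_r\}$ preserving each block $B_i=\{n_1+\dots+n_{i-1}+1,\dots,n_1+\dots+n_i\}$, with $S_{n_i}$ the permutations of $B_i$; $S_{n_i-k}\le S_{n_i}$ is the subgroup of permutations of the first $n_i-k$ elements of $B_i$ fixing its last $k$ elements. Subgroups $\{H_i\}_{i\in I}$ of a group $H$ invariably generate $H$ if for every choice of $\{\sigma_i\}_{i\in I}\subseteq H$ the conjugates $\{\sigma_i^{-1}H_i\sigma_i\}$ generate $H$. *)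

(* Defs.v *)
From mathcomp Require Import all_boot all_fingroup.
Set Implicit Arguments. Unset Strict Implicit. Unset Printing Implicit Defensive.
Local Open Scope group_scope.

(* Blocks: for n = [:: n_1; ...; n_r], points are 'I_(sumn n) (0-based),
   block i (0-based) = { sumn (take i n) <= x < sumn (take i.+1 n) }. *)
Definition block (n : seq nat) (i : nat) : {set 'I_(sumn n)} :=
  [set x : 'I_(sumn n) | (sumn (take i n) <= x) && (x < sumn (take i.+1 n))].

(* S_{n_1} x ... x S_{n_r}: permutations preserving every block. *)
Definition prod_sym (n : seq nat) : {set {perm 'I_(sumn n)}} :=
  [set s : {perm 'I_(sumn n)} |
     [forall i : 'I_(size n), s @: block n i == block n i]].

Definition block_top (n : seq nat) (k i : nat) : {set 'I_(sumn n)} :=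
  [set x in block n i | sumn (take i.+1 n) - k <= x].

(* S_{n_1-k} x ... x S_{n_r-k}: elements of the product fixing the last
   k elements of every block. *)
Definition prod_sym_sub (n : seq nat) (k : nat) : {set {perm 'I_(sumn n)}} :=
  [set s in prod_sym n |
     [forall i : 'I_(size n), forall x in block_top n k i, s x == x]].

Definition invariably_generate (gT : finGroupType) (I : finType)
    (G : {set gT}) (H : I -> {set gT}) : Prop :=
  forall sigma : I -> gT, (forall i, sigma i \in G) ->
    << \bigcup_(i : I) (H i :^ sigma i) >> = G.

(* Main.v *)
Require Import Defs.
From mathcomp Require Import all_boot all_fingroup zify.
Set Implicit Arguments. Unset Strict Implicit. Unset Printing Implicit Defensive.
Local Open Scope group_scope.

Lemma take_mono (n : seq nat) i j : i <= j -> sumn (take i n) <= sumn (take j n).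
Proof. by move=> ij; rewrite -(subnKC ij) takeD sumn_cat leq_addr. Qed.

Lemma take_le (n : seq nat) i : sumn (take i n) <= sumn n.
Proof. by rewrite -{2}(cat_take_drop i n) sumn_cat leq_addr. Qed.

Lemma sumn_takeS (n : seq nat) i : i < size n ->
  sumn (take i.+1 n) = sumn (take i n) + nth 0 n i.
Proof. by move=> h; rewrite (take_nth 0 h) sumn_rcons. Qed.

Lemma block_uniq n (i j : nat) x : x \in block n i -> x \in block n j -> i = j.
Proof.
rewrite !inE => /andP[a1 b1] /andP[a2 b2].
case: (ltngtP i j) => // h.
- have := take_mono n h; lia.
- have := take_mono n h; lia.
Qed.

Lemma block_exists n (x : 'I_(sumn n)) : exists i : 'I_(size n), x \in block n i.
Proof.
have ex : exists i, x < sumn (take i.+1 n).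
  exists (size n); rewrite take_oversize //; exact: ltn_ord.
case: (ex_minnP ex) => i hi hmin.
have isz : i < size n.
  rewrite ltnNge; apply/negP => hs.
  case: i hi hmin hs => [|i] hi hmin hs.
    by move: hs; case: n x {ex hi hmin} => [|??] [] //.
  have := hmin i; rewrite take_oversize; last lia.
  move=> /(_ (ltn_ord x)); lia.
exists (Ordinal isz); rewrite inE hi andbT /=.
case: i hi hmin isz => [|i] hi hmin isz; first by rewrite take0.
rewrite leqNgt; apply/negP => h; have := hmin i h; lia.
Qed.

Lemma card_itv N a b : b <= N -> #|[set x : 'I_N | a <= x < b]| = b - a.
Proof.
elim: b => [|b IH] hb.
  rewrite sub0n; apply/eqP; rewrite cards_eq0; apply/eqP/setP => x.
  by rewrite !inE ltn0 andbF.
case: (leqP a b) => hab.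
  have -> : [set x : 'I_N | a <= x < b.+1] = Ordinal hb |: [set x : 'I_N | a <= x < b].
    apply/setP => x; rewrite !inE ltnS leq_eqVlt -val_eqE /=.
    case: (ltngtP x b) => h; rewrite ?andbT ?andbF ?orbF //=; try lia.
  rewrite cardsU1 IH ?(ltnW hb) // !inE /= ltnn andbF /=; lia.
rewrite (_ : b.+1 - a = 0); last lia.
apply/eqP; rewrite cards_eq0; apply/eqP/setP => x; rewrite !inE; apply/negP.
move=> /andP[]; lia.
Qed.

Lemma prod_sym_group n : group_set (prod_sym n).
Proof.
apply/group_setP; split.
  rewrite inE; apply/forallP => i; apply/eqP/setP => y.
  rewrite (eq_imset _ (@perm1 _)) imset_id //.
move=> s t hs ht.
rewrite inE in hs; rewrite inE in ht; rewrite inE; apply/forallP => i.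
rewrite (eq_imset _ (permM s t)) imset_comp.
by rewrite (eqP (forallP hs i)) (eqP (forallP ht i)).
Qed.

Lemma prod_sym_mem n s (i : 'I_(size n)) x :
  s \in prod_sym n -> x \in block n i -> s x \in block n i.
Proof.
rewrite inE => /forallP/(_ i)/eqP {2}<- h; exact: imset_f.
Qed.

Lemma tperm_imset (T : finType) (a b : T) (S : {set T}) :
  (a \in S) = (b \in S) -> tperm a b @: S = S.
Proof.
move=> h; apply/setP => y; apply/imsetP/idP.
  case=> z zS ->; case: tpermP => [ez|ez|//]; subst z; by rewrite -?h // h.
move=> yS; exists (tperm a b y); last by rewrite tpermK.
case: tpermP => [ez|ez|//]; subst y; by rewrite -?h // h.
Qed.

Lemma block_card n (i : 'I_(size n)) : #|block n i| = nth 0 n i.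
Proof.
rewrite /block card_itv ?take_le // sumn_takeS //; lia.
Qed.

Lemma top_card n k (i : 'I_(size n)) : #|block_top n k i| <= k.
Proof.
apply: leq_trans (_ : #|[set x : 'I_(sumn n) | sumn (take i.+1 n) - k <= x < sumn (take i.+1 n)]| <= k).
  apply: subset_leq_card; apply/subsetP => x; rewrite !inE => /andP[/andP[_ ->] ->].
  by [].
rewrite card_itv ?take_le //; lia.
Qed.

Lemma top_sub n k i : block_top n k i \subset block n i.
Proof. by apply/subsetP => x; rewrite inE => /andP[]. Qed.

Lemma tperm_sub n k (i : 'I_(size n)) a b :
  a \in block n i :\: block_top n k i -> b \in block n i :\: block_top n k i ->
  tperm a b \in prod_sym_sub n k.
Proof.
move=> /setDP[ba na] /setDP[bb nb].
have oth : forall j : 'I_(size n), j != i -> a \notin block n j /\ b \notin block n j.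
  move=> j ji; split; apply/negP => h; move/eqP: ji; apply.
    by apply: val_inj; exact: block_uniq h ba.
  by apply: val_inj; exact: block_uniq h bb.
rewrite /prod_sym_sub inE; apply/andP; split.
  rewrite inE; apply/forallP => j; apply/eqP/tperm_imset.
  case: (eqVneq j i) => [->|ji]; first by rewrite ba bb.
  by case: (oth j ji) => /negbTE -> /negbTE ->.
apply/forallP => j; apply/forall_inP => x xt.
apply/eqP/tpermD; apply/negP => /eqP ex; subst x.
- case: (eqVneq j i) => [ji|ji].
    subst j; by rewrite xt in na.
  by case: (oth j ji) => h _; move: xt; rewrite inE => /andP[h' _]; rewrite h' in h.
- case: (eqVneq j i) => [ji|ji].
    subst j; by rewrite xt in nb.
  by case: (oth j ji) => _ h; move: xt; rewrite inE => /andP[h' _]; rewrite h' in h.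
Qed.

Lemma porbitJ (T : finType) (s t : {perm T}) y :
  porbit (s ^ t) (t y) = t @: porbit s y.
Proof.
apply/setP => z; apply/porbitP/imsetP.
  case=> m ->; exists ((s ^+ m) y); first exact: mem_porbit.
  by rewrite -conjXg permJ.
case=> w /porbitP[m ->] ->; exists m.
by rewrite -conjXg permJ.
Qed.

Section Main.
Variables (n : seq nat) (k : nat) (g : {perm 'I_(sumn n)})
  (sigma : bool -> {perm 'I_(sumn n)}).
Hypotheses (k0 : 0 < 2 * k) (hn : forall i : 'I_(size n), 2 * k < nth 0 n i)
  (hg : g \in prod_sym n)
  (hcyc : forall i : 'I_(size n), forall x, x \in block n i -> k < #|porbit g x|)
  (hs : forall b, sigma b \in prod_sym n).

Let H := fun b : bool => if b then prod_sym_sub n k else <[g]>.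
Let G := <<\bigcup_(b : bool) (H b :^ sigma b)>>.
Let PG := group (prod_sym_group n).

Lemma G_sub : G \subset prod_sym n.
Proof.
change (G \subset PG); rewrite /G gen_subG; apply/bigcupsP => b _.
apply/subsetP => y; rewrite mem_conjg => hy.
rewrite -(conjgKV (sigma b) y).
apply: (groupJ (G := PG)); last exact: hs.
case: b hy => /= hy.
  by move: hy; rewrite inE => /andP[].
by move: hy; apply/subsetP; rewrite (cycle_subG g PG).
Qed.

Lemma GP x : x \in G -> x \in prod_sym n.
Proof. by apply/subsetP; exact: G_sub. Qed.

Lemma tperm_trans a b c :
  tperm a b \in G -> tperm b c \in G -> tperm a c \in G.
Proof.
case: (eqVneq a b) => [->|ab] // hab.
case: (eqVneq b c) => [<-|bc] // hbc.
case: (eqVneq a c) => [->|ac]; first by rewrite tperm1 group1.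
have -> : tperm a c = (tperm b c) ^ (tperm a b).
  by rewrite tpermJ tpermR tpermD // eq_sym.
exact: groupJ.
Qed.


Lemma block_full (i : 'I_(size n)) x y :
  x \in block n i -> y \in block n i -> tperm x y \in G.
Proof.
set B := block n i; set T := block_top n k i.
set sg := sigma true; set tau := sigma false.
have cardB : #|B| = nth 0 n i by exact: block_card.
have cT : #|T| <= k by exact: top_card.
have hni := hn i.
have TB : T \subset B by exact: top_sub.
set A := [set sg z | z in B :\: T].
have AB : A \subset B.
  apply/subsetP => _ /imsetP[z /setDP[zB _] ->]; exact: prod_sym_mem (hs true) zB.
have cA : #|A| = #|B| - #|T|.
  by rewrite card_imset; [rewrite cardsD (setIidPr TB) | exact: perm_inj].
have tA : forall u v, u \in A -> v \in A -> tperm u v \in G.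
  move=> _ _ /imsetP[u hu ->] /imsetP[v hv ->].
  rewrite -tpermJ; apply: mem_gen; apply/bigcupP; exists true => //.
  by rewrite memJ_conjg /=; exact: (tperm_sub hu hv).
have [a0 a0A] : exists a0, a0 \in A.
  by apply/set0Pn; rewrite -card_gt0; lia.
set C := [set z | tperm a0 z \in G].
have AC : A \subset C by apply/subsetP => z zA; rewrite inE; exact: tA.
have a0B : a0 \in B by exact: (subsetP AB).
have CB : C \subset B.
  apply/subsetP => z; rewrite inE => /GP h.
  by have := prod_sym_mem h a0B; rewrite tpermL.
set g' := g ^ tau.
have g'G : g' \in G.
  apply: mem_gen; apply/bigcupP; exists false => //.
  by rewrite memJ_conjg /=; exact: cycle_id.
have g'P := GP g'G.
have cC : #|A| <= #|C| by exact: subset_leq_card.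
have g'C : forall z, z \in C -> g' z \in C.
  have [w] : exists w, w \in C :&: g' @: C.
    apply/set0Pn; rewrite -card_gt0.
    have hU : #|C :|: g' @: C| <= #|B|.
      apply: subset_leq_card; rewrite subUset CB /=.
      apply/subsetP => _ /imsetP[z zC ->]; exact: prod_sym_mem (subsetP CB z zC).
    have := cardsU C (g' @: C); rewrite card_imset; last exact: perm_inj.
    have := subset_leq_card (subsetIl C (g' @: C)).
    lia.
  case/setIP => wC /imsetP[z zC ew].
  have h1 : tperm a0 (g' a0) \in G.
    apply: (tperm_trans (b := w)); first by rewrite inE in wC.
    rewrite ew -tpermJ; apply: groupJ => //.
    by rewrite tpermC; rewrite inE in zC.
  move=> v; rewrite !inE => hv.
  apply: (tperm_trans h1).
  by rewrite -tpermJ; apply: groupJ.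
have g'Cm : forall m z, z \in C -> (g' ^+ m) z \in C.
  elim=> [|m IH] z zC; first by rewrite expg0 perm1.
  by rewrite expgSr permM; apply: g'C; apply: IH.
have full : forall z, z \in B -> z \in C.
  move=> z zB; apply/negPn/negP => zC.
  have sub : porbit g' z \subset B :\: C.
    apply/subsetP => w /[dup] wz /porbitP[m ew]; subst w; apply/setDP; split.
      apply: prod_sym_mem zB; exact: (groupX (G := PG)).
    apply/negP => hw; apply/negP: zC.
    rewrite -porbit_sym in wz.
    by case/porbitP: wz => m' e; rewrite e negbK; exact: g'Cm hw.
  have h1 := subset_leq_card sub.
  rewrite cardsD (setIidPr CB) in h1.
  have tz : tau^-1 z \in B.
    by apply: prod_sym_mem zB; apply: (groupVr (G := PG)); exact: hs.
  have := hcyc tz.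
  rewrite -(card_imset _ (@perm_inj _ tau)) -porbitJ permKV -/g'.
  move: h1 cC cA cT; clear; lia.
move=> xB yB.
apply: (tperm_trans (b := a0)).
  by rewrite tpermC; have := full x xB; rewrite inE.
by have := full y yB; rewrite inE.
Qed.

Lemma P_sub_G_ind m (s : {perm 'I_(sumn n)}) : #|[set y | s y != y]| <= m -> s \in prod_sym n -> s \in G.
Proof.
elim: m s => [|m IH] s hc sP.
  have -> : s = 1; last exact: group1.
  move: hc; rewrite leqn0 => /eqP/cards0_eq e.
  apply/permP => y; rewrite perm1; apply/eqP/negPn/negP => hy.
  have : y \in [set y | s y != y] by rewrite inE.
  by rewrite e inE.
case: (pickP [pred y | s y != y]) => [x /= hx|h0]; last first.
  have -> : s = 1; last exact: group1.
  by apply/permP => y; rewrite perm1; have := h0 y => /= /negbFE/eqP.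
set t := tperm x (s x).
have [i xi] := block_exists x.
have sxi : s x \in block n i by exact: prod_sym_mem.
have tG : t \in G by exact: (block_full xi sxi).
have tP : t \in prod_sym n by exact: GP.
have s'P : s * t \in prod_sym n by exact: (groupM (G := PG)).
have -> : s = (s * t) * t by rewrite -mulgA tperm2 mulg1.
apply: groupM => //; apply: IH => //.
have : [set y | (s * t) y != y] \proper [set y | s y != y].
  apply/properP; split.
    apply/subsetP => y; rewrite !inE permM; apply: contraR => /negPn/eqP sy.
    rewrite sy /t tpermD //.
      by apply: contra hx => /eqP e; rewrite e sy.
    apply/negP => /eqP e; move/eqP: hx; apply.
    by apply: (@perm_inj _ s); rewrite e sy.
  by exists x; rewrite !inE ?hx // permM /t tpermR eqxx.
move/proper_card; move: hc; clear; lia.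
Qed.

Lemma P_sub_G : prod_sym n \subset G.
Proof. apply/subsetP => s; exact: (P_sub_G_ind (leqnn _)). Qed.

End Main.


Theorem corollary3p9 (n : seq nat) (k : nat) (g : {perm 'I_(sumn n)}) :
  0 < 2 * k ->
  (forall i : 'I_(size n), 2 * k < nth 0 n i) ->
  g \in prod_sym n ->
  (forall i : 'I_(size n), forall x, x \in block n i -> k < #|porbit g x|) ->
  invariably_generate (prod_sym n)
    (fun b : bool => if b then prod_sym_sub n k else <[g]>).
Proof.
move=> k0 hn hg hcyc sigma hs.
apply/eqP; rewrite eqEsubset; apply/andP; split.
  exact: G_sub.
exact: P_sub_G.
Qed.
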